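(* Let $N\ge 2$ be an integer and for $n\ge 0$ let $$r_{N-1,N}(n)=\operatorname{CT}_{X_1,\ldots,X_N}\big(\sigma_{N-1}(X_1+X_1^{-1},\ldots,X_N+X_N^{-1})\big)^n .$$ Then for all $n\ge 0$, $$r_{N-1,N}(2n)=\sum_{\substack{k_1,\ldots,k_N\ge 0\\ k_1+\cdots+k_N=n}}\binom{2n}{2k_1,\ldots,2k_N}\binom{2(n-k_1)}{n-k_1}\cdots\binom{2(n-k_N)}{n-k_N}.$$ Moreover, if $N$ is even then $r_{N-1,N}(2n+1)=0$ for all $n\ge0$, and if $N$ is odd then for all $n\ge 0$, $$r_{N-1,N}(2n+1)=\sum_{\substack{k_1,\ldots,k_N\ge 0\\ k_1+\cdots+k_N=n+\frac{1-N}{2}}}\binom{2n+1}{2k_1+1,\ldots,2k_N+1}\binom{2(n-k_1)}{n-k_1}\cdots\binom{2(n-k_N)}{n-k_N}.$$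
   Context: $\sigma_{M}(y_1,\ldots,y_N)=\sum_{1\le j_1<\cdots<j_M\le N} y_{j_1}\cdots y_{j_M}$ is the $M$-th elementary symmetric polynomial. $\operatorname{CT}_{X_1,\ldots,X_N} f$ denotes the constant term (coefficient of $X_1^0\cdots X_N^0$) of a Laurent polynomial $f$. $\binom{m}{a_1,\ldots,a_N}=\frac{m!}{a_1!\cdots a_N!}$ denotes the multinomial coefficient (with $a_1+\cdots+a_N=m$); an empty sum is $0$. *)

(* Defs.v *)
From mathcomp Require Import all_boot all_order all_algebra.
Set Implicit Arguments. Unset Strict Implicit. Unset Printing Implicit Defensive.
Import GRing.Theory Num.Theory.
Local Open Scope ring_scope.

(* A Laurent polynomial in X_0..X_{N-1}: the formal sum of c * X^e over its terms. *)
Definition lpoly (N : nat) := seq (int * ('I_N -> int)).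

Definition ladd N (p q : lpoly N) : lpoly N := p ++ q.
Definition lmul N (p q : lpoly N) : lpoly N :=
  [seq (a.1 * b.1, fun i => a.2 i + b.2 i) | a <- p, b <- q].
Definition lone N : lpoly N := [:: (1, fun _ => 0)].
Definition lzero N : lpoly N := [::].
Definition lpow N (p : lpoly N) (n : nat) : lpoly N := iter n (lmul p) (lone N).

Definition lmon N (i : 'I_N) (e : int) : lpoly N :=
  [:: (1, fun j => if j == i then e else 0)].

Definition CT N (p : lpoly N) : int :=
  \sum_(t <- p | [forall i, t.2 i == 0]) t.1.

Definition lsigma N (M : nat) (y : 'I_N -> lpoly N) : lpoly N :=
  flatten (map (fun A : {set 'I_N} =>
                  foldr (fun i acc => lmul (y i) acc) (lone N) (enum A))
               (filter (fun A : {set 'I_N} => #|A| == M)%N (enum [set: {set 'I_N}]))).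

Definition Yvar N (i : 'I_N) : lpoly N := ladd (lmon i 1) (lmon i (-1)).

Definition r_seq (N n : nat) : int := CT (lpow (lsigma N.-1 (@Yvar N)) n).

Definition multinom N (m : nat) (a : 'I_N -> nat) : nat :=
  (m`! %/ \prod_(i < N) (a i)`!)%N.

(* Main.v *)
Require Import Defs.
From mathcomp Require Import all_boot all_order all_algebra.
From mathcomp Require Import zify ring lra.
Set Implicit Arguments. Unset Strict Implicit. Unset Printing Implicit Defensive.
Import GRing.Theory Num.Theory.
Local Open Scope ring_scope.

Definition Ifn N (p : lpoly N) (G : ('I_N -> int) -> int) : int :=
  \sum_(t <- p) t.1 * G t.2.

Lemma I_cat N (p q : lpoly N) G : Ifn (p ++ q) G = Ifn p G + Ifn q G.
Proof. by rewrite /Ifn big_cat. Qed.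

Lemma I_lmul N (p q : lpoly N) G :
  Ifn (lmul p q) G = Ifn p (fun e => Ifn q (fun f => G (fun i => e i + f i))).
Proof.
rewrite /Ifn /lmul big_flatten big_map; apply: eq_bigr => a _.
rewrite big_map mulr_sumr; apply: eq_bigr => b _ /=; by rewrite mulrA.
Qed.

Lemma I_lone N G : Ifn (lone N) G = G (fun _ => 0).
Proof. by rewrite /Ifn big_cons big_nil mul1r addr0. Qed.

Lemma I_lin N (p : lpoly N) (X : finType) (P : pred X) (c : X -> int) (G : X -> ('I_N -> int) -> int) :
  Ifn p (fun e => \sum_(x | P x) c x * G x e) = \sum_(x | P x) c x * Ifn p (G x).
Proof.
rewrite /Ifn.
under eq_bigr => t _ do rewrite mulr_sumr.
rewrite exchange_big /=; apply: eq_bigr => x _.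
rewrite mulr_sumr; apply: eq_bigr => t _; ring.
Qed.

Lemma CT_I N (p : lpoly N) : CT p = Ifn p (fun e => \prod_i ((e i == 0)%:R)).
Proof.
rewrite /CT /Ifn big_mkcond; apply: eq_bigr => t _.
case: (boolP [forall i, t.2 i == 0]) => [/forallP H|/forallPn [i Hi]].
  by rewrite big1 ?mulr1 // => i _; rewrite H.
by rewrite (bigD1 i) //= (negPf Hi) mul0r mulr0.
Qed.

Definition shift N (i : 'I_N) (s : int) (j : 'I_N) : int := if j == i then s else 0.

Lemma I_Yvar N (i : 'I_N) G : Ifn (Yvar i) G = G (shift i 1) + G (shift i (-1)).
Proof. by rewrite /Yvar /ladd I_cat /Ifn !big_cons !big_nil /= !mul1r !addr0. Qed.

Lemma I_Yprod N (s : seq 'I_N) (g : 'I_N -> int -> int) : uniq s ->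
  Ifn (foldr (fun i acc => lmul (Yvar i) acc) (lone N) s) (fun e => \prod_i g i (e i))
  = \prod_i (if i \in s then g i 1 + g i (-1) else g i 0).
Proof.
elim: s g => [|i s IH] g /=.
  by move=> _; rewrite I_lone; apply: eq_bigr => j _.
case/andP => his us.
rewrite I_lmul I_Yvar.
have E : forall sg : int, Ifn (foldr (fun i0 acc => lmul (Yvar i0) acc) (lone N) s)
   (fun f => \prod_i0 g i0 (shift i sg i0 + f i0)) =
   g i sg * \prod_(j | j != i) (if j \in s then g j 1 + g j (-1) else g j 0).
  move=> sg.
  rewrite (IH (fun j x => g j (shift i sg j + x))) // (bigD1 i) //= (negPf his).
  rewrite /shift eqxx addr0; congr (_ * _); apply: eq_bigr => j /negPf ->.
  by rewrite !add0r.
rewrite !E [RHS](bigD1 i) //= in_cons eqxx /= -mulrDl; congr (_ * _).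
by apply: eq_bigr => j /negPf ji; rewrite in_cons ji.
Qed.

Lemma I_sigma N (g : 'I_N -> int -> int) : (0 < N)%N ->
  Ifn (lsigma N.-1 (@Yvar N)) (fun e => \prod_i g i (e i)) =
  \sum_j g j 0 * \prod_(i | i != j) (g i 1 + g i (-1)).
Proof.
move=> hN.
rewrite /lsigma {1}/Ifn big_flatten /= big_map big_filter.
have E : forall A : {set 'I_N},
  \sum_(t <- foldr (fun i => lmul (Yvar i)) (lone N) (enum A)) t.1 * \prod_i g i (t.2 i)
  = \prod_i (if i \in A then g i 1 + g i (-1) else g i 0).
  move=> A; rewrite -[LHS]/(Ifn _ (fun e => \prod_i g i (e i))) I_Yprod ?enum_uniq //.
  by apply: eq_bigr => i _; rewrite mem_enum.
under eq_bigr => A _ do rewrite E.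
rewrite big_enum_cond /= (reindex_inj (@setC_inj _)) /=.
rewrite (eq_bigl (fun B => B \in [set [set j] | j in 'I_N])); last first.
  move=> B /=; rewrite in_setT /=.
  have := cardsC B; rewrite card_ord => HC.
  apply/idP/imsetP.
    move/eqP=> H. move: HC; rewrite H => HC; have : #|B| = 1%N by lia.
    by move/eqP/cards1P=> [x ->]; exists x.
  by move=> [x _ ->]; rewrite cardsC1 card_ord.
rewrite big_imset /=; last by move=> x y _ _; apply: set1_inj.
apply: eq_bigr => j _.
rewrite (bigD1 j) //= in_setC in_set1 eqxx /=; congr (_ * _).
by apply: eq_bigr => i ij; rewrite in_setC in_set1 ij.
Qed.

Definition Bf (k : nat) (h : int -> int) : int :=
  \sum_(t < k.+1) ('C(k, t))%:R * h (((2 * t)%N)%:Z - k%:Z).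

Lemma Bf_ext k h h' : h =1 h' -> Bf k h = Bf k h'.
Proof. by move=> E; apply: eq_bigr => t _; rewrite E. Qed.

Lemma Bf_S k h : Bf k.+1 h = Bf k (fun x => h (1 + x)) + Bf k (fun x => h (-1 + x)).
Proof.
rewrite /Bf big_ord_recl /=.
under eq_bigr => t _ do rewrite binS natrD mulrDl.
rewrite big_split /= addrA [RHS]addrC; congr (_ + _); last first.
  by apply: eq_bigr => t _ /=; congr (_ * h _); rewrite /bump /=; lia.
rewrite big_ord_recr /= (bin_small (ltnSn k)) mul0r addr0.
rewrite [RHS]big_ord_recl /=; congr (_ + _).
  by rewrite !bin0; congr (_ * h _); lia.
by apply: eq_bigr => t _ /=; congr (_ * h _); rewrite /bump /=; lia.
Qed.

Lemma Bf_delta k : Bf k (fun x => (x == 0)%:R) = if odd k then 0 else ('C(k, k./2))%:R.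
Proof.
rewrite /Bf.
case: (boolP (odd k)) => ok.
  rewrite big1 // => t _.
  have -> : (((2 * t)%N)%:Z - k%:Z == 0) = false.
    apply/negP => /eqP H. have H2 : (2 * t)%N = k by lia.
    by move: ok; rewrite -H2 mul2n odd_double.
  by rewrite mulr0.
have hk : (k./2 < k.+1)%N by rewrite ltnS; lia.
rewrite (bigD1 (Ordinal hk)) //= big1 ?addr0.
  have -> : (((2 * k./2)%N)%:Z - k%:Z == 0) = true.
    apply/eqP. have := odd_double_half k. rewrite (negPf ok) add0n -mul2n => H.
    lia.
  by rewrite mulr1.
move=> t tne.
have -> : (((2 * t)%N)%:Z - k%:Z == 0) = false.
  apply/negP => /eqP H. move: tne => /eqP; apply; apply: val_inj => /=.
  have := odd_double_half k. rewrite (negPf ok) add0n -mul2n => H2. lia.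
by rewrite mulr0.
Qed.
Local Close Scope ring_scope.

Lemma fact_prod_dvd (I : Type) (r : seq I) (a : I -> nat) :
  \prod_(i <- r) (a i)`! %| (\sum_(i <- r) a i)`!.
Proof.
elim: r => [|x r IH]; first by rewrite !big_nil.
rewrite !big_cons -(bin_fact (leq_addr (\sum_(j <- r) a j) (a x))) addKn.
by apply: dvdn_mull; apply: dvdn_mul.
Qed.

Lemma multinomP N m (a : 'I_N -> nat) : \sum_i a i = m ->
  multinom m a * \prod_i (a i)`! = m`!.
Proof. by move=> <-; rewrite /multinom divnK // fact_prod_dvd. Qed.

Lemma multinom_ext N m (a b : 'I_N -> nat) : a =1 b -> multinom m a = multinom m b.
Proof. by move=> E; rewrite /multinom (eq_bigr _ (fun i _ => congr1 _ (E i))). Qed.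

Definition dec N (j : 'I_N) (a : 'I_N -> nat) i := if i == j then (a i).-1 else a i.

Lemma multinom_pascal N m (a : 'I_N -> nat) : \sum_i a i = m.+1 ->
  \sum_j (if 0 < a j then multinom m (dec j a) else 0) = multinom m.+1 a.
Proof.
move=> Ha.
have P0 : 0 < \prod_i (a i)`! by rewrite prodn_gt0 // => i; rewrite fact_gt0.
apply/eqP; rewrite -(eqn_pmul2r P0) multinomP // big_distrl /=.
rewrite (eq_bigr (fun j => m`! * a j)).
  by rewrite -big_distrr /= Ha factS mulnC.
move=> j _.
case: (posnP (a j)) => [->|aj]; first by rewrite muln0 mul0n.
have Sd : \sum_i dec j a i = m.
  rewrite (bigD1 j) //= /dec eqxx (eq_bigr a) => [|i /negPf -> //].
  by move: Ha; rewrite (bigD1 j) //=; lia.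
rewrite -(multinomP Sd) -mulnA; congr (_ * _).
rewrite (bigD1 j) //= [in RHS](bigD1 j) //= /dec eqxx.
rewrite [X in _ = _ * X * _](eq_bigr (fun i => (a i)`!)) => [|i /negPf -> //].
by rewrite -{1}(prednK aj) factS prednK //; ring.
Qed.

Definition up N M (j : 'I_N) (a : {ffun 'I_N -> 'I_M.+1}) : {ffun 'I_N -> 'I_M.+1} :=
  [ffun i => if i == j then inord (a i).+1 else a i].
Definition down N M (j : 'I_N) (a : {ffun 'I_N -> 'I_M.+1}) : {ffun 'I_N -> 'I_M.+1} :=
  [ffun i => if i == j then inord (a i).-1 else a i].
Definition ssum N M (a : {ffun 'I_N -> 'I_M.+1}) : nat := \sum_i (a i : nat).

Lemma up_val N M j (a : {ffun 'I_N -> 'I_M.+1}) i : (a j < M)%N ->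
  (up j a i : nat) = if i == j then (a i).+1 else a i.
Proof.
move=> H; rewrite /up ffunE; case: eqP => [->|//]; by rewrite inordK.
Qed.

Lemma ssum_up N M j (a : {ffun 'I_N -> 'I_M.+1}) : (a j < M)%N -> ssum (up j a) = (ssum a).+1.
Proof.
move=> H; rewrite /ssum (bigD1 j) //= [in RHS](bigD1 j) //= up_val // eqxx.
rewrite (eq_bigr (fun i => (a i : nat))) // => i /negPf ij; by rewrite up_val // ij.
Qed.

Lemma up_down N M j (a : {ffun 'I_N -> 'I_M.+1}) : (0 < a j)%N -> up j (down j a) = a.
Proof.
move=> H; apply/ffunP => i; rewrite /up /down !ffunE; case: eqP => [->|//].
apply: val_inj => /=.
have h1 : ((a j).-1 < M.+1)%N by have := ltn_ord (a j); lia.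
by rewrite (inordK h1) prednK // inordK.
Qed.

Lemma down_up N M j (a : {ffun 'I_N -> 'I_M.+1}) : (a j < M)%N -> down j (up j a) = a.
Proof.
move=> H; apply/ffunP => i; rewrite /up /down !ffunE; case: eqP => [->|//].
by apply: val_inj => /=; rewrite !inordK //; lia.
Qed.

Lemma ssum_ge N M j (a : {ffun 'I_N -> 'I_M.+1}) : (a j <= ssum a)%N.
Proof. by rewrite /ssum (bigD1 j) //= leq_addr. Qed.

Local Open Scope ring_scope.
Lemma comb N M m (Phi : {ffun 'I_N -> 'I_M.+1} -> int) : (m < M)%N ->
  \sum_(a | ssum a == m.+1) ((multinom m.+1 (fun i => a i))%:R * Phi a)
  = \sum_j \sum_(a | ssum a == m) ((multinom m (fun i => a i))%:R * Phi (up j a)).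
Proof.
move=> hm.
under eq_bigr => a /eqP Ha do rewrite -(multinom_pascal Ha) natr_sum mulr_suml.
rewrite exchange_big /=; apply: eq_bigr => j _.
rewrite (bigID (fun a : {ffun 'I_N -> 'I_M.+1} => (0 < a j)%N)) /= [X in _ + X]big1 ?addr0; last first.
  by move=> a /andP [_ /negPf ->]; rewrite mul0r.
rewrite (eq_bigr (fun a : {ffun 'I_N -> 'I_M.+1} => (multinom m (dec j (fun i => a i)))%:R * Phi a)); last first.
  by move=> a /andP [_ ->].
rewrite (reindex_onto (up j) (down j)); last by move=> a /andP [_]; apply: up_down.
apply: eq_big => a.
  case: (ltnP (a j) M) => H.
    rewrite ssum_up // down_up // eqxx andbT up_val // eqxx ltnS /=.
    by rewrite andbT.
  have E : (up j a j : nat) = 0%N.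
    rewrite /up ffunE eqxx /inord /insubd insubN //.
    by rewrite -leqNgt ltnS.
  rewrite E ltnn andbF /=; apply/esym/eqP => Hs; have := ssum_ge j a; rewrite Hs => h2.
  by have := leq_trans H h2; rewrite leqNgt hm.
move=> /andP [/andP [_ Hp] _]; congr (_%:R * _).
have H : (a j < M)%N.
  case: (ltnP (a j) M) => // H; move: Hp.
  rewrite /up ffunE eqxx /inord /insubd insubN //.
  by rewrite -leqNgt ltnS.
apply: multinom_ext => i; rewrite /dec.
rewrite up_val //; case: eqP => // ->; by rewrite eqxx.
Qed.

Lemma I_ext N (p : lpoly N) G G' : G =1 G' -> Ifn p G = Ifn p G'.
Proof. by move=> E; apply: eq_bigr => t _; rewrite E. Qed.

Definition T N M m (g : 'I_N -> int -> int) : int :=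
  \sum_(a : {ffun 'I_N -> 'I_M.+1} | ssum a == m)
     (multinom m (fun i => a i))%:R * \prod_i Bf (m - a i) (g i).

Lemma main N M (hN : (0 < N)%N) m : (m <= M)%N -> forall g,
  Ifn (lpow (lsigma N.-1 (@Yvar N)) m) (fun e => \prod_i g i (e i)) = T M m g.
Proof.
elim: m => [|m IH] hm g.
  rewrite /lpow /= I_lone /T (big_pred1 [ffun => ord0]); last first.
    move=> a; rewrite /ssum sum_nat_eq0 /=; apply/forallP/eqP.
      by move=> H; apply/ffunP => i; rewrite ffunE; apply: val_inj => /=; apply/eqP/H.
    by move=> -> i; rewrite ffunE.
  have -> : @multinom N 0 (fun i : 'I_N => ([ffun=> (ord0 : 'I_M.+1)] : {ffun 'I_N -> 'I_M.+1}) i) = 1%N.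
    by rewrite /multinom big1 // => i _; rewrite ffunE.
  rewrite mul1r; apply: eq_bigr => i _; rewrite ffunE /Bf big_ord1 /= mul1r.
  by congr (g i _).
rewrite /lpow iterS -/(lpow _ m) I_lmul.
rewrite (@I_ext _ _ _ (fun e => T M m (fun i x => g i (e i + x)))); last first.
  by move=> e; rewrite -IH // ltnW.
rewrite /T I_lin.
under eq_bigr => a _ do rewrite (I_sigma (fun i y => Bf (m - a i) (fun x => g i (y + x)))) // mulr_sumr.
rewrite exchange_big (comb _ hm) /=; apply: eq_bigr => j _.
apply: eq_bigr => a /eqP Ha; congr (_ * _).
have aj : (a j < M)%N by have := ssum_ge j a; rewrite Ha; lia.
rewrite [RHS](bigD1 j) //= up_val // eqxx subSS; congr (_ * _).
  by apply: Bf_ext => x; rewrite add0r.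
apply: eq_bigr => i /negPf ij; rewrite up_val // ij -Bf_S.
have := ssum_ge i a; rewrite Ha => ai.
by rewrite subSn.
Qed.

Lemma reindex_par N n b : (b <= 1)%N ->
  T (2 * n + b)%N (2 * n + b)%N (fun (i : 'I_N) x => (x == 0)%:R) =
  (\sum_(k : {ffun 'I_N -> 'I_n.+1} | (2 * \sum_(i < N) (k i : nat) + b * N == 2 * n + b)%N)
     (multinom (2 * n + b) (fun i => 2 * k i + b)%N *
      \prod_(i < N) 'C(2 * (n - k i), n - k i))%N)%:R.
Proof.
move=> hb.
rewrite /T.
under eq_bigr => a _ do under eq_bigr => i _ do rewrite Bf_delta.
rewrite (bigID (fun a : {ffun 'I_N -> 'I_(2 * n + b).+1} => [forall i, odd (a i) == odd b])) /=.
rewrite [X in _ + X]big1 ?addr0; last first.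
  move=> a /andP [/eqP Ha /forallPn [i /negP Hi]].
  have ai : (a i <= 2 * n + b)%N by have := ssum_ge i a; rewrite Ha.
  rewrite (bigD1 i) //= oddB // oddD oddM /=.
  by move: Hi; case: (odd (a i)); case: (odd b) => //= _; rewrite !mul0r mulr0.
pose dbl (k : {ffun 'I_N -> 'I_n.+1}) : {ffun 'I_N -> 'I_(2 * n + b).+1} := [ffun i => inord (2 * k i + b)].
pose hlf (a : {ffun 'I_N -> 'I_(2 * n + b).+1}) : {ffun 'I_N -> 'I_n.+1} := [ffun i => inord ((a i)./2)].
have dblv : forall k i, (dbl k i : nat) = (2 * k i + b)%N.
  move=> k i; rewrite /dbl ffunE inordK //; have := ltn_ord (k i); lia.
rewrite (reindex_onto dbl hlf); last first.
  move=> a /andP [/eqP Ha /forallP Q]; apply/ffunP => i; apply: val_inj.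
  have ai : (a i <= 2 * n + b)%N by have := ssum_ge i a; rewrite Ha.
  have := odd_double_half (a i); move: (Q i) => /eqP ->.
  have ob : (odd b : nat) = b by move: hb; rewrite leq_eqVlt ltnS leqn0 => /orP [] /eqP ->.
  rewrite ob => H; rewrite /= /dbl /hlf !ffunE.
  have h1 : ((a i)./2 < n.+1)%N.
    rewrite ltnS -(leq_pmul2l (isT : 0 < 2)%N). rewrite -(leq_add2l b). rewrite mul2n H; by apply: (leq_trans ai); rewrite addnC.
  have e : (2 * (a i)./2 + b = a i)%N by rewrite mul2n addnC H.
  by rewrite (inordK h1) e inord_val.
have ob : (odd b : nat) = b by move: hb; rewrite leq_eqVlt ltnS leqn0 => /orP [] /eqP ->.
have hv : forall k : {ffun 'I_N -> 'I_n.+1}, forall i, ((2 * k i + b)./2 = k i)%N /\ (2 * n + b - (2 * k i + b) = 2 * (n - k i))%N.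
  move=> k i; split; last by rewrite subnDr mulnBr.
  rewrite halfD oddM andFb add0n mul2n doubleK.
  by move: hb; rewrite leq_eqVlt ltnS leqn0 => /orP [] /eqP ->; rewrite addn0.
rewrite natr_sum; apply: eq_big => k.
  have -> : ssum (dbl k) = (2 * \sum_(i < N) (k i : nat) + b * N)%N.
    rewrite /ssum (eq_bigr (fun i => 2 * k i + b)%N); last by move=> i _; rewrite dblv.
    by rewrite big_split /= -big_distrr /= big_const_ord iter_addn_0.
  have -> : [forall i, odd (dbl k i) == odd b] = true.
    by apply/forallP => i; rewrite dblv oddD oddM /= eqxx.
  have -> : (hlf (dbl k) == k) = true.
    apply/eqP/ffunP => i; apply: val_inj; rewrite /hlf ffunE dblv (proj1 (hv k i)).
    by rewrite inord_val.
  by rewrite !andbT.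
move=> _; rewrite natrM natr_prod; congr (_ * _).
  by congr (_%:R); apply: multinom_ext => i; rewrite dblv.
apply: eq_bigr => i _; rewrite dblv (proj2 (hv k i)) oddM /= mul2n doubleK.
by [].
Qed.

Lemma r_T N m : (0 < N)%N -> r_seq N m = T m m (fun (i : 'I_N) x => (x == 0)%:R).
Proof. by move=> hN; rewrite /r_seq CT_I -(main hN (leqnn m)). Qed.

Theorem theorem1 (N : nat) (hN : (2 <= N)%N) :
  (forall n : nat,
     r_seq N (2 * n) =
     (\sum_(k : {ffun 'I_N -> 'I_n.+1} | (\sum_(i < N) (k i : nat) == n)%N)
        (multinom (2 * n) (fun i => 2 * k i)%N *
         \prod_(i < N) 'C(2 * (n - k i), n - k i))%N)%:Z) /\
  (~~ odd N -> forall n : nat, r_seq N (2 * n + 1) = 0) /\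
  (odd N -> forall n : nat,
     r_seq N (2 * n + 1) =
     (\sum_(k : {ffun 'I_N -> 'I_n.+1}
             | (\sum_(i < N) (k i : nat) + (N - 1)./2 == n)%N)
        (multinom (2 * n + 1) (fun i => 2 * k i + 1)%N *
         \prod_(i < N) 'C(2 * (n - k i), n - k i))%N)%:Z).
Proof.
have hN0 : (0 < N)%N by lia.
split; [|split].
- move=> n.
  have E := reindex_par N n (isT : (0 <= 1)%N).
  rewrite (_ : r_seq N (2 * n) = r_seq N (2 * n + 0)%N); last by rewrite addn0.
  rewrite r_T // E -natz; congr (_%:R).
  apply: eq_big => k.
    by rewrite mul0n !addn0 eqn_pmul2l.
  by move=> _; congr (_ * _); rewrite addn0; apply: multinom_ext => i; rewrite addn0.
- move=> ev n.
  have E := reindex_par N n (isT : (1 <= 1)%N).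
  rewrite r_T // E big_pred0 // => k.
  apply/negbTE/negP => /eqP H.
  have := congr1 odd H; rewrite !oddD (negPf ev) /=; by case: (odd (\sum_(i < N) k i)); case: (odd n).
- move=> od n.
  have E := reindex_par N n (isT : (1 <= 1)%N).
  rewrite r_T // E -natz; congr (_%:R).
  apply: eq_bigl => k.
  have := odd_double_half N; rewrite od => HN.
  rewrite mul1n; apply/eqP/eqP; lia.
Qed.
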